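(* Let $L$ be a multisorted algebra in the positive existential signature satisfying axioms (1), (2), (3), (7), (8), (9), (10). Let $M_1$ be a model of the almost morphic conditions of $L$. Then there is a model $M_2\supseteq M_1$ of the almost morphic conditions of $L$ which has witnesses over $M_1$.
   Context: The Boolean prime ideal theorem (equivalently, compactness) is assumed. Signature. There is a sort $n$ for each $n\ge0$. For every function $\alpha\colon\{1,\dots,n\}\to\{1,\dots,k\}$ there is a unary function symbol (''substitution'') $\alpha\colon n\to k$ (argument of sort $n$, value of sort $k$). Each sort has $0,1,\vee,\wedge$; for each $n$ there is $\exists\colon n+1\to n$ (positive existential signature). For $\alpha\colon k\to n$, $\beta\colon n\to m$, $\beta\circ\alpha$ is the substitution symbol of the composite function. $\alpha^{\mathrm{tuple}}(x_1,\dots,x_k)=(x_{\alpha(1)},\dots,x_{\alpha(n)})$. The associated cylindrification of $\exists\colon n+1\to n$ is $c\colon n\to n+1$, $c(i)=i$; $\exists^{(n)}$ is $n$-fold projection. $x\le y$ means $x=x\wedge y$. Axioms: (1) each sort is a bounded distributive lattice; (2) substitutions preserve $0,1,\vee,\wedge$; (3) $(\beta\circ\alpha)(r)=\beta(\alpha(r))$; (7) $\exists(0)=0$, $\exists(r\vee s)=\exists(r)\vee\exists(s)$; (8) $r\le c(\exists(r))$; (9) $\exists(r\wedge c(s))=\exists(r)\wedge s$; (10) for substitutions $\alpha_i\colon k_i\to m$ ($i=1,\dots,n$) and $\beta_i\colon k_i+1\to m+n$ with $\beta_i(j)=\alpha_i(j)$ for $j\le k_i$, $\beta_i(k_i+1)=m+i$: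 $\exists^{(n)}(\bigwedge_i\beta_i(r_i))=\bigwedge_i\alpha_i(\exists(r_i))$ for all $r_i$ of sort $k_i+1$. Almost morphic conditions. Consider the first order relational language with an $n$-ary relation symbol (also written $r$) for each element $r$ of sort $n$ of $L$. The almost morphic conditions of $L$ are the sentences: $\forall\bar x\,\neg 0(\bar x)$; $\forall\bar x\, 1(\bar x)$; $\forall\bar x\,((r\vee s)(\bar x)\leftrightarrow r(\bar x)\lor s(\bar x))$; $\forall\bar x\,((r\wedge s)(\bar x)\leftrightarrow r(\bar x)\land s(\bar x))$; $\forall\bar x\,((\alpha(r))(\bar x)\leftrightarrow r(\alpha^{\mathrm{tuple}}(\bar x)))$ for every substitution $\alpha$ and $r$ of matching sort; and $\forall\bar x\,\forall y\,(r(\bar xy)\to(\exists(r))(\bar x))$ (all for elements of appropriate sorts). For a model $M$ and an $n$-tuple $\bar a$ from $M$, ${\mathfrak p}(\bar a)=\{r \text{ of sort } n: M\models r(\bar a)\}$, which is a prime filter on sort $n$. For a prime filter $G$ on sort $n+1$, $c^{-1}(G)=\{u \text{ of sort } n: c(u)\in G\}$. Witnesses: if $M_1\subseteq M_2$ (substructure) are models of the almost morphic conditions, $M_2$ has witnesses over $M_1$ if for every tuple $\bar a=(a_1,\dots,a_n)$ from $M_1$ and every prime filter $G$ on sort $n+1$ of $L$ with $c^{-1}(G)={\mathfrak p}(\bar a)$, there is $b\in M_2$ with $M_2\models r(\bar a b)$ for every $r\in G$. A prime filter is a proper, nonempty, upward-closed, $\wedge$-closed subset of a sort with $x\vee y\in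 F\Rightarrow x\in F$ or $y\in F$. *)

(* Defs.v *)
From mathcomp Require Import all_boot.
Set Implicit Arguments. Unset Strict Implicit. Unset Printing Implicit Defensive.

(* A substitution symbol  alpha : n -> k  is given by a (finite, hence
   extensional) function  {1..n} -> {1..k}, encoded 0-based as
   {ffun 'I_n -> 'I_k}. *)
Record msalg := MSAlg {
  ms_sort :> nat -> Type;
  ms_zero : forall n, ms_sort n;
  ms_one : forall n, ms_sort n;
  ms_join : forall n, ms_sort n -> ms_sort n -> ms_sort n;
  ms_meet : forall n, ms_sort n -> ms_sort n -> ms_sort n;
  ms_subst : forall n k, {ffun 'I_n -> 'I_k} -> ms_sort n -> ms_sort k;
  ms_ex : forall n, ms_sort n.+1 -> ms_sort n
}.

Arguments ms_zero {L} n : rename.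
Arguments ms_one {L} n : rename.
Arguments ms_join {L n} : rename.
Arguments ms_meet {L n} : rename.
Arguments ms_subst {L n k} : rename.
Arguments ms_ex {L n} : rename.

Section Defs.
Variable L : msalg.

Definition ms_le n (x y : L n) : Prop := x = ms_meet x y.

Definition cyl_fun n : {ffun 'I_n -> 'I_n.+1} := [ffun i => widen_ord (leqnSn n) i].
Definition cyl n (u : L n) : L n.+1 := ms_subst (cyl_fun n) u.

Definition comp_fun n k m (beta : {ffun 'I_k -> 'I_m}) (alpha : {ffun 'I_n -> 'I_k})
  : {ffun 'I_n -> 'I_m} := [ffun i => beta (alpha i)].

Fixpoint ex_iter (n m : nat) : L (n + m) -> L m :=
  match n return L (n + m) -> L m with
  | 0 => fun x => x
  | n'.+1 => fun x => @ex_iter n' m (ms_ex (n := n' + m) x)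
  end.

Definition ax1 : Prop := forall n, forall x y z : L n,
  ms_join x (ms_join y z) = ms_join (ms_join x y) z /\
  ms_meet x (ms_meet y z) = ms_meet (ms_meet x y) z /\
  ms_join x y = ms_join y x /\
  ms_meet x y = ms_meet y x /\
  ms_join x (ms_meet x y) = x /\
  ms_meet x (ms_join x y) = x /\
  ms_meet x (ms_join y z) = ms_join (ms_meet x y) (ms_meet x z) /\
  ms_join x (@ms_zero L n) = x /\
  ms_meet x (@ms_one L n) = x.

Definition ax2 : Prop := forall n k (alpha : {ffun 'I_n -> 'I_k}),
  [/\ ms_subst alpha (@ms_zero L n) = @ms_zero L k,
      ms_subst alpha (@ms_one L n) = @ms_one L k,
      forall x y : L n, ms_subst alpha (ms_join x y) = ms_join (ms_subst alpha x) (ms_subst alpha y)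
    & forall x y : L n, ms_subst alpha (ms_meet x y) = ms_meet (ms_subst alpha x) (ms_subst alpha y)].

Definition ax3 : Prop := forall n k m (alpha : {ffun 'I_n -> 'I_k}) (beta : {ffun 'I_k -> 'I_m})
  (r : L n), ms_subst (comp_fun beta alpha) r = ms_subst beta (ms_subst alpha r).

Definition ax7 : Prop := forall n,
  ms_ex (@ms_zero L n.+1) = @ms_zero L n /\
  forall r s : L n.+1, ms_ex (ms_join r s) = ms_join (ms_ex r) (ms_ex s).

Definition ax8 : Prop := forall n (r : L n.+1), ms_le r (cyl (ms_ex r)).

Definition ax9 : Prop := forall n (r : L n.+1) (s : L n),
  ms_ex (ms_meet r (cyl s)) = ms_meet (ms_ex r) s.

(* (10): indices i = 1..n are encoded 0-based as i : 'I_n; the sort m+n is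
   the sort numbered n + m whose first m variables are the "old" ones and
   whose variable number m+i (1-based) is 0-based position m + i. *)
Definition ax10 : Prop :=
  forall (n m : nat) (k : 'I_n -> nat)
    (alpha : forall i, {ffun 'I_(k i) -> 'I_m})
    (beta : forall i, {ffun 'I_(k i).+1 -> 'I_(n + m)})
    (r : forall i, L (k i).+1),
    (forall i (j : 'I_(k i)), val (beta i (widen_ord (leqnSn (k i)) j)) = val (alpha i j)) ->
    (forall i, val (beta i ord_max) = m + val i) ->
    @ex_iter n m (\big[ms_meet/@ms_one L (n + m)]_(i < n) ms_subst (beta i) (r i))
    = \big[ms_meet/@ms_one L m]_(i < n) ms_subst (alpha i) (ms_ex (r i)).

Definition ms_axioms : Prop := ax1 /\ ax2 /\ ax3 /\ ax7 /\ ax8 /\ ax9 /\ ax10.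

(* Structures for the relational language: an n-ary relation symbol for
   each element of sort n.  n-tuples are finite functions 'I_n -> M. *)
Record mstruct := MStruct {
  st_carrier :> Type;
  st_rel : forall n, L n -> {ffun 'I_n -> st_carrier} -> Prop
}.

Definition snoc (M : Type) n (x : {ffun 'I_n -> M}) (y : M) : {ffun 'I_n.+1 -> M} :=
  [ffun i => match unlift ord_max i with Some j => x j | None => y end].

Definition tuple_subst (M : Type) n k (alpha : {ffun 'I_n -> 'I_k}) (x : {ffun 'I_k -> M})
  : {ffun 'I_n -> M} := [ffun i => x (alpha i)].

Definition almost_morphic (M : mstruct) : Prop :=
  (forall n (x : {ffun 'I_n -> M}), ~ st_rel (@ms_zero L n) x) /\
      (forall n (x : {ffun 'I_n -> M}), st_rel (@ms_one L n) x) /\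
      (forall n (r s : L n) (x : {ffun 'I_n -> M}),
        st_rel (ms_join r s) x <-> st_rel r x \/ st_rel s x) /\
      (forall n (r s : L n) (x : {ffun 'I_n -> M}),
        st_rel (ms_meet r s) x <-> st_rel r x /\ st_rel s x) /\
      (forall n k (alpha : {ffun 'I_n -> 'I_k}) (r : L n) (x : {ffun 'I_k -> M}),
        st_rel (ms_subst alpha r) x <-> st_rel r (tuple_subst alpha x)) /\
      (forall n (r : L n.+1) (x : {ffun 'I_n -> M}) (y : M),
        st_rel r (snoc x y) -> st_rel (ms_ex r) x).

Definition prime_filter n (G : L n -> Prop) : Prop :=
  [/\ exists x, ~ G x,
      exists x, G x,
      forall x y, G x -> ms_le x y -> G y,
      forall x y, G x -> G y -> G (ms_meet x y)
    & forall x y, G (ms_join x y) -> G x \/ G y].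

Definition substructure (M1 M2 : mstruct) (e : M1 -> M2) : Prop :=
  injective e /\
  forall n (r : L n) (a : {ffun 'I_n -> M1}),
    st_rel r a <-> st_rel r [ffun i => e (a i)].

Definition has_witnesses (M1 M2 : mstruct) (e : M1 -> M2) : Prop :=
  forall n (a : {ffun 'I_n -> M1}) (G : L n.+1 -> Prop),
    prime_filter G ->
    (forall u : L n, G (cyl u) <-> st_rel u a) ->
    exists b : M2, forall r, G r -> st_rel r (snoc [ffun i => e (a i)] b).

End Defs.

(* Main.v *)
Require Import Defs.
From mathcomp Require Import all_boot.
From mathcomp Require boolp classical_sets.
From Stdlib Require Classical.

Module M1.
Import all_boot.
Set Implicit Arguments. Unset Strict Implicit. Unset Printing Implicit Defensive.

Section Lat.
Variable L : msalg.
Hypothesis H1 : ax1 L.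
Hypothesis H2 : ax2 L.
Hypothesis H3 : ax3 L.
Hypothesis H7 : ax7 L.
Hypothesis H8 : ax8 L.
Hypothesis H9 : ax9 L.

Local Notation le := (@ms_le L _).

Lemma meetC n (x y : L n) : ms_meet x y = ms_meet y x.
Proof. by have [_ [_ [_ [? _]]]] := H1 x y x. Qed.
Lemma joinC n (x y : L n) : ms_join x y = ms_join y x.
Proof. by have [_ [_ [? _]]] := H1 x y x. Qed.
Lemma meetA n (x y z : L n) : ms_meet x (ms_meet y z) = ms_meet (ms_meet x y) z.
Proof. by have [_ [? _]] := H1 x y z. Qed.
Lemma joinA n (x y z : L n) : ms_join x (ms_join y z) = ms_join (ms_join x y) z.
Proof. by have [? _] := H1 x y z. Qed.
Lemma absJ n (x y : L n) : ms_join x (ms_meet x y) = x.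
Proof. by have [_ [_ [_ [_ [? _]]]]] := H1 x y x. Qed.
Lemma absM n (x y : L n) : ms_meet x (ms_join x y) = x.
Proof. by have [_ [_ [_ [_ [_ [? _]]]]]] := H1 x y x. Qed.
Lemma distr n (x y z : L n) : ms_meet x (ms_join y z) = ms_join (ms_meet x y) (ms_meet x z).
Proof. by have [_ [_ [_ [_ [_ [_ [? _]]]]]]] := H1 x y z. Qed.
Lemma join0 n (x : L n) : ms_join x (ms_zero n) = x.
Proof. by have [_ [_ [_ [_ [_ [_ [_ [? _]]]]]]]] := H1 x x x. Qed.
Lemma meet1 n (x : L n) : ms_meet x (ms_one n) = x.
Proof. by have [_ [_ [_ [_ [_ [_ [_ [_ ?]]]]]]]] := H1 x x x. Qed.

Lemma meetxx n (x : L n) : ms_meet x x = x.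
Proof. by rewrite -{2}(absJ x x) absM. Qed.

Lemma le_refl n (x : L n) : le x x.
Proof. by rewrite /ms_le meetxx. Qed.
Lemma le_trans n (x y z : L n) : le x y -> le y z -> le x z.
Proof. by rewrite /ms_le => E1 E2; rewrite E1 -meetA -E2 -E1. Qed.
Lemma leE n (x y : L n) : le x y <-> ms_join x y = y.
Proof.
split; rewrite /ms_le => E.
  by rewrite E joinC meetC absJ.
by rewrite -E absM.
Qed.
Lemma le_antisym n (x y : L n) : le x y -> le y x -> x = y.
Proof. by rewrite /ms_le => E1 E2; rewrite E1 meetC -E2. Qed.
Lemma meet_l n (x y : L n) : le (ms_meet x y) x.
Proof. by rewrite /ms_le [ms_meet _ x]meetC meetA meetxx. Qed.
Lemma meet_r n (x y : L n) : le (ms_meet x y) y.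
Proof. by rewrite meetC; apply: meet_l. Qed.
Lemma le_meet n (x y z : L n) : le x y -> le x z -> le x (ms_meet y z).
Proof. by rewrite /ms_le => E1 E2; rewrite meetA -E1 -E2. Qed.
Lemma le1 n (x : L n) : le x (ms_one n).
Proof. by rewrite /ms_le meet1. Qed.
Lemma le0 n (x : L n) : le (ms_zero n) x.
Proof. by apply/leE; rewrite joinC join0. Qed.
Lemma join_l n (x y : L n) : le x (ms_join x y).
Proof. by rewrite /ms_le absM. Qed.
Lemma join_r n (x y : L n) : le y (ms_join x y).
Proof. by rewrite joinC; apply: join_l. Qed.
Lemma le_join n (x y z : L n) : le x z -> le y z -> le (ms_join x y) z.
Proof. by move=> /leE E1 /leE E2; apply/leE; rewrite -joinA E2 E1. Qed.
Lemma meet_mono n (a b c d : L n) : le a c -> le b d -> le (ms_meet a b) (ms_meet c d).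
Proof.
move=> h1 h2; apply: le_meet; [apply: le_trans (meet_l _ _) h1|apply: le_trans (meet_r _ _) h2].
Qed.
Lemma join_mono n (a b c d : L n) : le a c -> le b d -> le (ms_join a b) (ms_join c d).
Proof.
move=> h1 h2; apply: le_join; [apply: le_trans h1 (join_l _ _)|apply: le_trans h2 (join_r _ _)].
Qed.
Lemma le_meetE n (x y : L n) : le x y -> ms_meet x y = x.
Proof. by move=> ->; rewrite -meetA meetxx. Qed.

Lemma subst_meet n k (a : {ffun 'I_n -> 'I_k}) (x y : L n) :
  ms_subst a (ms_meet x y) = ms_meet (ms_subst a x) (ms_subst a y).
Proof. by case: (H2 a). Qed.
Lemma subst_join n k (a : {ffun 'I_n -> 'I_k}) (x y : L n) :
  ms_subst a (ms_join x y) = ms_join (ms_subst a x) (ms_subst a y).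
Proof. by case: (H2 a). Qed.
Lemma subst_one n k (a : {ffun 'I_n -> 'I_k}) : ms_subst a (@ms_one L n) = @ms_one L k.
Proof. by case: (H2 a). Qed.
Lemma subst_zero n k (a : {ffun 'I_n -> 'I_k}) : ms_subst a (@ms_zero L n) = @ms_zero L k.
Proof. by case: (H2 a). Qed.
Lemma subst_mono n k (a : {ffun 'I_n -> 'I_k}) (x y : L n) : le x y -> le (ms_subst a x) (ms_subst a y).
Proof. by rewrite /ms_le => E; rewrite -subst_meet -E. Qed.
Lemma subst_comp n k m (a : {ffun 'I_n -> 'I_k}) (b : {ffun 'I_k -> 'I_m}) (c : {ffun 'I_n -> 'I_m}) (r : L n) :
  (forall i, c i = b (a i)) -> ms_subst c r = ms_subst b (ms_subst a r).
Proof.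
move=> E; rewrite -H3; congr ms_subst; apply/ffunP=> i; by rewrite ffunE.
Qed.

Lemma ex_mono n (x y : L n.+1) : le x y -> le (ms_ex x) (ms_ex y).
Proof. by move=> /leE E; apply/leE; have [_ HJ] := H7 n; rewrite -HJ E. Qed.
Lemma ex_iter_mono n m (x y : L (n + m)) : le x y -> le (ex_iter x) (ex_iter y).
Proof. elim: n m x y => [|n IH] m x y //= h; apply: IH; exact: ex_mono. Qed.
Lemma ex_cyl_le n (v : L n) : le (ms_ex (cyl v)) v.
Proof.
have E : cyl v = ms_meet (ms_one n.+1) (cyl v) by rewrite meetC meet1.
by rewrite E H9; apply: meet_r.
Qed.

End Lat.

End M1.
Import M1.

Module M2.
Import all_boot.
Import Classical.
Set Implicit Arguments. Unset Strict Implicit. Unset Printing Implicit Defensive.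

Lemma widen_lift k (j : 'I_k) : widen_ord (leqnSn k) j = lift ord_max j.
Proof. by apply: val_inj; rewrite /= /bump leqNgt ltn_ord. Qed.

Section Tup.
Variable Y : Type.

Lemma tcover_fun k (v : 'I_k -> Y) :
  exists q (u : 'I_q -> Y) (i : 'I_k -> 'I_q), [/\ injective u, forall j, u (i j) = v j &
    forall l, exists j, i j = l].
Proof.
elim: k v => [|k IH] v.
  by exists 0, v, id; split => // [[]|l]; [|exists l].
pose v' := fun i : 'I_k => v (widen_ord (leqnSn k) i).
have [q [u [io [iu Hu Su]]]] := IH v'.
case: (classic (exists l, u l = v ord_max)) => [[l Hl]|Hno].
  exists q, u, (fun j => if unlift ord_max j is Some j' then io j' else l); split=> //.
    move=> j; case: (unliftP ord_max j) => [j' ->|->]; last by rewrite Hl.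
    rewrite Hu /v'; congr v; by rewrite widen_lift.
  move=> l'; have [j' Ej'] := Su l'; exists (lift ord_max j'); by rewrite liftK.
exists q.+1, (fun l => if unlift ord_max l is Some l' then u l' else v ord_max),
  (fun j => if unlift ord_max j is Some j' then lift ord_max (io j') else ord_max); split.
- move=> a b.
  case: (unliftP ord_max a) => [a' ->|->]; case: (unliftP ord_max b) => [b' ->|->] //.
  + by move=> /iu ->.
  + by move=> E; case: Hno; exists a'.
  + by move=> E; case: Hno; exists b'.
- move=> j; case: (unliftP ord_max j) => [j' ->|->]; last by rewrite unlift_none.
  rewrite liftK Hu /v'; congr v; by rewrite widen_lift.
- move=> l'; case: (unliftP ord_max l') => [l0 ->|->].
    have [j0 Ej0] := Su l0; exists (lift ord_max j0); by rewrite liftK Ej0.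
  by exists ord_max; rewrite unlift_none.
Qed.

Definition tsub n k (a : {ffun 'I_n -> 'I_k}) (x : {ffun 'I_k -> Y}) : {ffun 'I_n -> Y} :=
  [ffun i => x (a i)].

Lemma tcover k (v : {ffun 'I_k -> Y}) :
  exists q (u : {ffun 'I_q -> Y}) (i : {ffun 'I_k -> 'I_q}), injective u /\ tuple_subst i u = v.
Proof.
have [q [u [io [iu Hu _]]]] := tcover_fun v.
exists q, [ffun l => u l], [ffun j => io j]; split.
  by move=> a b; rewrite !ffunE => /iu.
by apply/ffunP=> j; rewrite !ffunE.
Qed.

Lemma inj_uniq q n (u : {ffun 'I_q -> Y}) (a b : {ffun 'I_n -> 'I_q}) :
  injective u -> tuple_subst a u = tuple_subst b u -> a = b.
Proof.
move=> iu E; apply/ffunP=> j; apply: iu.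
by have := congr1 (fun f : {ffun 'I_n -> Y} => f j) E; rewrite !ffunE.
Qed.

Definition tcat k1 k2 (x : {ffun 'I_k1 -> Y}) (y : {ffun 'I_k2 -> Y}) : {ffun 'I_(k1 + k2) -> Y} :=
  [ffun i => match split i with inl j => x j | inr j => y j end].
Definition lsh k1 k2 : {ffun 'I_k1 -> 'I_(k1 + k2)} := [ffun i => lshift k2 i].
Definition rsh k1 k2 : {ffun 'I_k2 -> 'I_(k1 + k2)} := [ffun i => rshift k1 i].

Lemma tcat_l k1 k2 (x : {ffun 'I_k1 -> Y}) (y : {ffun 'I_k2 -> Y}) :
  tuple_subst (lsh k1 k2) (tcat x y) = x.
Proof.
apply/ffunP=> i; rewrite !ffunE.
by have := unsplitK (inl _ i) => /= ->.
Qed.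
Lemma tcat_r k1 k2 (x : {ffun 'I_k1 -> Y}) (y : {ffun 'I_k2 -> Y}) :
  tuple_subst (rsh k1 k2) (tcat x y) = y.
Proof.
apply/ffunP=> i; rewrite !ffunE.
by have := unsplitK (inr _ i) => /= ->.
Qed.

Lemma tcover2 k1 k2 (x : {ffun 'I_k1 -> Y}) (y : {ffun 'I_k2 -> Y}) :
  exists q (u : {ffun 'I_q -> Y}) (a : {ffun 'I_k1 -> 'I_q}) (b : {ffun 'I_k2 -> 'I_q}),
    [/\ injective u, tuple_subst a u = x & tuple_subst b u = y].
Proof.
have [q [u [io [iu Hu]]]] := tcover (tcat x y).
exists q, u, [ffun i => io (lsh k1 k2 i)], [ffun i => io (rsh k1 k2 i)]; split=> //.
  rewrite -[RHS](tcat_l x y) -Hu; apply/ffunP=> i; by rewrite !ffunE.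
rewrite -[RHS](tcat_r x y) -Hu; apply/ffunP=> i; by rewrite !ffunE.
Qed.

Lemma tsub_comp n k m (a : {ffun 'I_n -> 'I_k}) (b : {ffun 'I_k -> 'I_m}) (x : {ffun 'I_m -> Y}) :
  tuple_subst a (tuple_subst b x) = tuple_subst (comp_fun b a) x.
Proof. by apply/ffunP=> i; rewrite !ffunE. Qed.

End Tup.

End M2.
Import M2.

Module M3.
Import all_boot.
Import Classical.
Set Implicit Arguments. Unset Strict Implicit. Unset Printing Implicit Defensive.

Section Clo.
Variable L : msalg.
Hypothesis H1 : ax1 L.
Hypothesis H2 : ax2 L.
Hypothesis H3 : ax3 L.
Variable X : Type.

Definition Th := forall k, {ffun 'I_k -> X} -> L k -> Prop.

Inductive Cl (T : Th) : Th :=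
| clB k x r : T k x r -> Cl T x r
| cl1 k x : Cl T x (@ms_one L k)
| clM k x r s : Cl T x r -> Cl T x s -> @Cl T k x (ms_meet r s)
| clU k x r s : Cl T x r -> ms_le r s -> @Cl T k x s
| clSU n k (a : {ffun 'I_n -> 'I_k}) x r : Cl T (tuple_subst a x) r -> Cl T x (ms_subst a r)
| clSD n k (a : {ffun 'I_n -> 'I_k}) x r : Cl T x (ms_subst a r) -> Cl T (tuple_subst a x) r.

Definition subTh (T T' : Th) := forall k x r, T k x r -> T' k x r.
Definition UnTh (T T' : Th) : Th := fun k x r => T k x r \/ T' k x r.

Lemma Cl_mono T T' : subTh T T' -> subTh (Cl T) (Cl T').
Proof.
move=> S k x r H; elim: H => {k x r}.
- by move=> k x r /S; apply: clB.
- by move=> *; apply: cl1.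
- by move=> *; apply: clM.
- by move=> k x r s _ Hc h; exact: clU Hc h.
- by move=> *; apply: clSU.
- by move=> *; apply: clSD.
Qed.

Lemma Cl_idem T : subTh (Cl (Cl T)) (Cl T).
Proof.
move=> k x r H; elim: H => {k x r} //.
- by move=> *; apply: cl1.
- by move=> *; apply: clM.
- by move=> k x r s _ Hc h; exact: clU Hc h.
- by move=> *; apply: clSU.
- by move=> *; apply: clSD.
Qed.

Lemma Cl_sub T : subTh T (Cl T).
Proof. by move=> k x r; apply: clB. Qed.

Inductive Single n (x : {ffun 'I_n -> X}) (r : L n) : Th :=
  sgl : Single x r x r.

Definition Ded (T : Th) n (x : {ffun 'I_n -> X}) (r : L n) : Th := fun k z t =>
  exists q (u : {ffun 'I_q -> X}) (a : {ffun 'I_k -> 'I_q}) (b : {ffun 'I_n -> 'I_q}) f,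
  [/\ injective u, tuple_subst a u = z, tuple_subst b u = x, T q u f &
      ms_le (ms_meet f (ms_subst b r)) (ms_subst a t)].

Lemma ded T (Tcl : subTh (Cl T) T) n (x : {ffun 'I_n -> X}) (r : L n) :
  subTh (Cl (UnTh T (Single x r))) (Ded T x r).
Proof.
move=> k z t H; elim: H => {k z t}.
- move=> k z t [Hz|Hs].
    have [q [u [a [b [iu Ea Eb]]]]] := tcover2 z x.
    exists q, u, a, b, (ms_subst a t); split=> //; last exact: meet_l.
    by apply: Tcl; apply: clSU; rewrite Ea; apply: clB.
  case: Hs.
  have [q [u [b [iu Eb]]]] := tcover x.
  exists q, u, b, b, (ms_one q); split=> //; last exact: meet_r.
  by apply: Tcl; apply: cl1.
- move=> k z.
  have [q [u [a [b [iu Ea Eb]]]]] := tcover2 z x.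
  exists q, u, a, b, (ms_one q); split=> //; first by apply: Tcl; apply: cl1.
  by rewrite subst_one //; apply: le1.
- move=> k z t1 t2 _ [q1 [u1 [a1 [b1 [f1 [iu1 Ea1 Eb1 T1 le1']]]]]]
                 _ [q2 [u2 [a2 [b2 [f2 [iu2 Ea2 Eb2 T2 le2']]]]]].
  have [q [u [i1 [i2 [iu Ei1 Ei2]]]]] := tcover2 u1 u2.
  have Ea : comp_fun i1 a1 = comp_fun i2 a2.
    by apply: (inj_uniq iu); rewrite -!tsub_comp Ei1 Ei2 Ea1 Ea2.
  have Eb : comp_fun i1 b1 = comp_fun i2 b2.
    by apply: (inj_uniq iu); rewrite -!tsub_comp Ei1 Ei2 Eb1 Eb2.
  exists q, u, (comp_fun i1 a1), (comp_fun i1 b1), (ms_meet (ms_subst i1 f1) (ms_subst i2 f2)).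
  split.
  + exact: iu.
  + by rewrite -tsub_comp Ei1.
  + by rewrite -tsub_comp Ei1.
  + apply: Tcl; apply: clM; apply: clSU; [rewrite Ei1|rewrite Ei2]; exact: clB.
  + rewrite subst_meet //; apply: le_meet => //.
      apply: le_trans (_ : ms_le _ (ms_subst i1 (ms_meet f1 (ms_subst b1 r)))) _ => //.
        rewrite subst_meet // -H3; apply: meet_mono => //; [apply: meet_l|apply: le_refl] => //.
      by rewrite H3; apply: subst_mono.
    apply: le_trans (_ : ms_le _ (ms_subst i2 (ms_meet f2 (ms_subst b2 r)))) _ => //.
      rewrite subst_meet // -H3 Eb; apply: meet_mono => //; [apply: meet_r|apply: le_refl] => //.
    by rewrite Ea H3; apply: subst_mono.
- move=> k z t s _ [q [u [a [b [f [iu Ea Eb Tf lef]]]]]] lts.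
  exists q, u, a, b, f; split=> //; apply: le_trans lef _ => //; exact: subst_mono.
- move=> n' k g z t _ [q [u [a [b [f [iu Ea Eb Tf lef]]]]]].
  have [q' [u' [i [c [iu' Ei Ec]]]]] := tcover2 u z.
  have Ec' : comp_fun c g = comp_fun i a.
    by apply: (inj_uniq iu'); rewrite -!tsub_comp Ei Ec Ea.
  exists q', u', c, (comp_fun i b), (ms_subst i f); split=> //.
  + by rewrite -tsub_comp Ei.
  + by apply: Tcl; apply: clSU; rewrite Ei; apply: clB.
  + rewrite -H3 Ec' !H3 -subst_meet //; exact: subst_mono.
- move=> n' k g z t _ [q [u [a [b [f [iu Ea Eb Tf lef]]]]]].
  exists q, u, (comp_fun a g), b, f; split=> //.
  + by rewrite -tsub_comp Ea.
  + by rewrite H3.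
Qed.

End Clo.

End M3.
Import M3.

Module M4.
Import all_boot.
Import boolp classical_sets.
Import Classical.
Set Implicit Arguments. Unset Strict Implicit. Unset Printing Implicit Defensive.

Local Open Scope classical_set_scope.

Section Model.
Variable L : msalg.
Hypothesis H1 : ax1 L.
Hypothesis H2 : ax2 L.
Hypothesis H3 : ax3 L.
Hypothesis H8 : ax8 L.
Variable M1 : mstruct L.
Hypothesis HM1 : almost_morphic M1.
Variable X : Type.
Variable e : M1 -> X.
Variable Base : Th L X.

Definition emb k (c : {ffun 'I_k -> M1}) : {ffun 'I_k -> X} := [ffun i => e (c i)].

Definition Conserv (S : Th L X) := forall k (c : {ffun 'I_k -> M1}) t, Cl S (emb c) t -> st_rel t c.

Hypothesis HB : Conserv Base.

Definition Fm := {k : nat & ({ffun 'I_k -> X} * L k)%type}.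
Definition toTh (A : set Fm) : Th L X := fun k x r => A (existT _ k (x, r)).

Definition PZ (A : set Fm) := Conserv (UnTh Base (toTh A)).

Lemma chain_cl (F : set (set Fm)) : total_on F subset ->
  forall k x r, Cl (UnTh Base (toTh (\bigcup_(A in F) A))) x r ->
    Cl Base x r \/ exists2 A, F A & @Cl L X (UnTh Base (toTh A)) k x r.
Proof.
move=> tot k x r H; elim: H => {k x r}.
- move=> k x r [Hb|[A FA Ax]]; first by left; apply: clB.
  by right; exists A => //; apply: clB; right.
- by move=> k x; left; apply: cl1.
- move=> k x r s _ [Hr|[A FA Hr]] _ [Hs|[B FB Hs]].
  + by left; apply: clM.
  + right; exists B => //; apply: clM => //.
    by apply: Cl_mono Hr => ? ? ? ?; left.
  + right; exists A => //; apply: clM => //.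
    by apply: Cl_mono Hs => ? ? ? ?; left.
  + have [AB|BA] := tot _ _ FA FB.
      right; exists B => //; apply: clM => //; apply: Cl_mono Hr => ? ? ? [?|?]; [left|right] => //.
      exact: AB.
    right; exists A => //; apply: clM => //; apply: Cl_mono Hs => ? ? ? [?|?]; [left|right] => //.
    exact: BA.
- move=> k x r s _ [Hr|[A FA Hr]] h; first by left; apply: clU h.
  by right; exists A => //; apply: clU h.
- move=> n k a x r _ [Hr|[A FA Hr]]; first by left; apply: clSU.
  by right; exists A => //; apply: clSU.
- move=> n k a x r _ [Hr|[A FA Hr]]; first by left; apply: clSD.
  by right; exists A => //; apply: clSD.
Qed.

Definition primeTh (T : Th L X) := forall k x (r s : L k),
  T k x (ms_join r s) -> T k x r \/ T k x s.

Lemma single_of (k : nat) (x : {ffun 'I_k -> X}) (r : L k) (psi : Fm) :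
  psi = existT _ k (x, r) ->
  match psi with existT k' (z, t) => Single x r z t end.
Proof. by move=> ->; constructor. Qed.

Lemma tcat_emb k1 k2 (c1 : {ffun 'I_k1 -> M1}) (c2 : {ffun 'I_k2 -> M1}) :
  emb (tcat c1 c2) = tcat (emb c1) (emb c2).
Proof. apply/ffunP=> i; rewrite !ffunE; by case: (split i) => j; rewrite ffunE. Qed.

Lemma exists_theory : exists T : Th L X,
  [/\ subTh Base T, subTh (Cl T) T, primeTh T & Conserv T].
Proof.
have [|A [PA Amax]] := @Zorn_bigcup Fm PZ.
  move=> F FP tot; rewrite /PZ /Conserv => k c t /(chain_cl tot) [|[A FA HA]]; first exact: HB.
  exact: FP _ FA _ _ _ HA.
set T := toTh A.
have clo : subTh (Cl (UnTh Base T)) T.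
  move=> k x r H; apply: NNPP => nT.
  apply: (Amax (A `|` [set existT _ k (x, r)])).
    split; first by move=> ? ?; left.
    by move=> /(_ (existT _ k (x, r))) /(_ (or_intror erefl)).
  move=> k' c t Hc; apply: PA; apply: Cl_idem.
  apply: Cl_mono Hc => k1 z t1 [Hb|[Ha|Hs]].
  - by apply: clB; left.
  - by apply: clB; right.
  - by have := single_of Hs => /= -[]; exact: H.
have BT : subTh Base T by move=> k x r h; apply: clo; apply: clB; left.
have TT : subTh (Cl T) T.
  by move=> k x r h; apply: clo; apply: Cl_mono h => ? ? ? ?; right.
have ConsT : Conserv T.
  by move=> k c t h; apply: PA; apply: Cl_mono h => ? ? ? ?; right.
have step : forall k x (r : L k), ~ T k x r ->
    exists k' (c : {ffun 'I_k' -> M1}) t, Ded T x r (emb c) t /\ ~ st_rel t c.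
  move=> k x r nT; apply: NNPP => nE.
  apply: (Amax (A `|` [set existT _ k (x, r)])).
    split; first by move=> ? ?; left.
    by move=> /(_ (existT _ k (x, r))) /(_ (or_intror erefl)).
  move=> k' c t Hc; apply: NNPP => nst; apply: nE; exists k', c, t; split=> //.
  apply: ded => //; apply: Cl_mono Hc => k1 z t1 [Hb|[Ha|Hs]].
  - by left; apply: BT.
  - by left.
  - by right; have := single_of Hs.
exists T; split=> //.
move=> k x r s Hj; apply: NNPP => nrs.
have nr : ~ T k x r by move=> h; apply: nrs; left.
have ns : ~ T k x s by move=> h; apply: nrs; right.
have [k1 [c1 [t1 [[q1 [u1 [a1 [b1 [f1 [iu1 Ea1 Eb1 T1 l1]]]]]] nt1]]]] := step _ _ _ nr.
have [k2 [c2 [t2 [[q2 [u2 [a2 [b2 [f2 [iu2 Ea2 Eb2 T2 l2]]]]]] nt2]]]] := step _ _ _ ns.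
have [q [u [i1 [i2 [iu Ei1 Ei2]]]]] := tcover2 u1 u2.
have Eb : comp_fun i1 b1 = comp_fun i2 b2.
  by apply: (inj_uniq iu); rewrite -!tsub_comp Ei1 Ei2 Eb1 Eb2.
pose rho : {ffun 'I_(k1 + k2) -> 'I_q} :=
  [ffun j => match split j with inl j1 => comp_fun i1 a1 j1 | inr j2 => comp_fun i2 a2 j2 end].
have Hl : comp_fun rho (lsh k1 k2) = comp_fun i1 a1.
  apply/ffunP=> j; rewrite !ffunE; by have := unsplitK (inl _ j) => /= ->; rewrite ffunE.
have Hr : comp_fun rho (rsh k1 k2) = comp_fun i2 a2.
  apply/ffunP=> j; rewrite !ffunE; by have := unsplitK (inr _ j) => /= ->; rewrite ffunE.
have Tu : T q u (ms_subst rho (ms_join (ms_subst (lsh k1 k2) t1) (ms_subst (rsh k1 k2) t2))).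
  apply: TT; apply: (clU (r := ms_meet (ms_meet (ms_subst i1 f1) (ms_subst i2 f2))
                 (ms_subst (comp_fun i1 b1) (ms_join r s)))).
    apply: clM; first by apply: clM; apply: clSU; [rewrite Ei1|rewrite Ei2]; apply: clB.
    by apply: clSU; rewrite -tsub_comp Ei1 Eb1; apply: clB.
  rewrite (subst_join H2 rho) -!H3 Hl Hr (subst_join H2 (comp_fun i1 b1)) distr //.
  apply: join_mono => //.
    apply: le_trans (_ : ms_le _ (ms_subst i1 (ms_meet f1 (ms_subst b1 r)))) _ => //.
      rewrite subst_meet // -H3; apply: meet_mono => //; [apply: meet_l|apply: le_refl] => //.
    by rewrite H3; apply: subst_mono.
  apply: le_trans (_ : ms_le _ (ms_subst i2 (ms_meet f2 (ms_subst b2 s)))) _ => //.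
    rewrite subst_meet // -H3 Eb; apply: meet_mono => //; [apply: meet_r|apply: le_refl] => //.
  by rewrite H3; apply: subst_mono.
have Eu : tuple_subst rho u = emb (tcat c1 c2).
  apply/ffunP=> j; rewrite !ffunE; case: (split j) => j'.
    by have := congr1 (fun f : {ffun _ -> X} => f j') Ea1; rewrite -Ei1 !ffunE.
  by have := congr1 (fun f : {ffun _ -> X} => f j') Ea2; rewrite -Ei2 !ffunE.
have HC : Cl T (emb (tcat c1 c2)) (ms_join (ms_subst (lsh k1 k2) t1) (ms_subst (rsh k1 k2) t2)).
  by rewrite -Eu; apply: clSD; apply: clB.
move/ConsT: HC.
have [_ [_ [HJ [_ [HS _]]]]] := HM1.
move=> /HJ [] /HS; [rewrite tcat_l|rewrite tcat_r] => //.
Qed.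

End Model.

End M4.
Import M4.

Module M5.
Import all_boot.
Import Classical.
Set Implicit Arguments. Unset Strict Implicit. Unset Printing Implicit Defensive.

Lemma cyl_snoc (Y : Type) n (x : {ffun 'I_n -> Y}) (y : Y) :
  tuple_subst (cyl_fun n) (snoc x y) = x.
Proof. by apply/ffunP=> i; rewrite !ffunE widen_lift liftK. Qed.

Section Build.
Variable L : msalg.
Hypothesis H1 : ax1 L.
Hypothesis H2 : ax2 L.
Hypothesis H3 : ax3 L.
Hypothesis H8 : ax8 L.
Variable M1 : mstruct L.
Hypothesis HM1 : almost_morphic M1.
Variable m0 : M1.
Variable X : Type.
Variable e : M1 -> X.
Hypothesis ie : injective e.
Variable Base : Th L X.
Variable T : Th L X.
Hypothesis BT : subTh Base T.
Hypothesis TT : subTh (Cl T) T.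
Hypothesis PT : primeTh T.
Hypothesis CT : Conserv e T.
Hypothesis HBase1 : forall k (c : {ffun 'I_k -> M1}) r, st_rel r c -> @Base k (emb e c) r.

Definition M2 : mstruct L := @MStruct L X (fun k r x => @T k x r).

Lemma M2_sub : substructure (M2 := M2) e.
Proof.
split=> // n r a; split.
  by move=> h; apply: BT; apply: HBase1.
by move=> h; apply: CT; apply: clB.
Qed.

Lemma M2_am : almost_morphic M2.
Proof.
have Tcl : forall k x r, Cl T x r -> @T k x r by move=> *; apply: TT.
split; [|split; [|split; [|split; [|split]]]].
- move=> n x /= h.
  pose a : {ffun 'I_0 -> 'I_n} := [ffun i => widen_ord (leq0n n) i].
  have h' : Cl T (tuple_subst a x) (@ms_zero L 0).
    by apply: clSD; rewrite subst_zero //; apply: clB.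
  have E : tuple_subst a x = emb e ([ffun i => m0] : {ffun 'I_0 -> M1}) by apply/ffunP => -[].
  rewrite E in h'; have := CT h'; by case: HM1 => /(_ 0 [ffun i => m0]).
- by move=> n x /=; apply: Tcl; apply: cl1.
- move=> n r s x /=; split; first exact: PT.
  by case=> h; apply: Tcl; apply: clU (clB h) _; [apply: join_l|apply: join_r].
- move=> n r s x /=; split.
    by move=> h; split; apply: Tcl; apply: clU (clB h) _; [apply: meet_l|apply: meet_r].
  by case=> ? ?; apply: Tcl; apply: clM; apply: clB.
- move=> n k a r x /=; split.
    by move=> h; apply: Tcl; apply: clSD; apply: clB.
  by move=> h; apply: Tcl; apply: clSU; apply: clB.
- move=> n r x y /= h.
  have h1 : Cl T (snoc x y) (cyl (ms_ex r)) by apply: clU (clB h) _; apply: H8.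
  by rewrite -(cyl_snoc x y); apply: Tcl; apply: clSD; exact: h1.
Qed.

End Build.

End M5.
Import M5.

Module M6.
Import all_boot.
Set Implicit Arguments. Unset Strict Implicit. Unset Printing Implicit Defensive.

Lemma pos_lt p m (i : 'I_(m + p)) : p <= i -> i - p < m.
Proof. move=> h; rewrite ltn_subLR // [p + m]addnC; exact: ltn_ord. Qed.

Definition pos_case p m (i : 'I_(m + p)) : 'I_p + 'I_m :=
  match ltnP i p with
  | LtnNotGeq H => inl (Ordinal H)
  | GeqNotLtn H => inr (Ordinal (pos_lt H))
  end.

Lemma oldpos_lt p m (a : 'I_p) : a < m + p.
Proof. by rewrite ltn_addl. Qed.
Definition oldpos p m (a : 'I_p) : 'I_(m + p) := Ordinal (oldpos_lt m a).
Lemma newpos_lt p m (b : 'I_m) : p + b < m + p.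
Proof. by rewrite addnC ltn_add2r. Qed.
Definition newpos p m (b : 'I_m) : 'I_(m + p) := Ordinal (newpos_lt p b).

Lemma pos_case_old p m (a : 'I_p) : pos_case (oldpos m a) = inl a.
Proof.
rewrite /pos_case; case: ltnP => /= h; first by congr inl; apply: val_inj.
by exfalso; move: h; rewrite leqNgt ltn_ord.
Qed.
Lemma pos_case_new p m (b : 'I_m) : pos_case (newpos p b) = inr b.
Proof.
rewrite /pos_case; case: ltnP => /= h.
  by exfalso; move: h; rewrite ltnNge leq_addr.
by congr inr; apply: val_inj => /=; rewrite addKn.
Qed.
Lemma pos_caseK p m (i : 'I_(m + p)) :
  match pos_case i with inl a => oldpos m a | inr b => newpos p b end = i.
Proof.
rewrite /pos_case; case: ltnP => h; apply: val_inj => //=.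
by rewrite subnKC.
Qed.

Definition oldf p m : {ffun 'I_p -> 'I_(m + p)} := [ffun a => oldpos m a].
Definition idf p : {ffun 'I_p -> 'I_p} := [ffun a => a].

Definition from0 (P : 'I_0 -> Type) (i : 'I_0) : P i :=
  False_rect (P i) (Bool.diff_false_true (etrans (esym (ltn0 i)) (ltn_ord i))).

Section ExL.
Variable L : msalg.
Hypothesis H1 : ax1 L.
Hypothesis H2 : ax2 L.
Hypothesis H3 : ax3 L.
Hypothesis H7 : ax7 L.
Hypothesis H9 : ax9 L.

Lemma oldfS p m : oldf p m.+1 = comp_fun (cyl_fun (m + p)) (oldf p m).
Proof. by apply/ffunP=> a; rewrite !ffunE; apply: val_inj. Qed.
Lemma oldf0 p : oldf p 0 = idf p.
Proof. by apply/ffunP=> a; rewrite !ffunE; apply: val_inj. Qed.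

Lemma EXM m p (s : L p) (h : L (m + p)) :
  ex_iter (ms_meet (ms_subst (oldf p m) s) h) = ms_meet (ms_subst (idf p) s) (ex_iter h).
Proof.
elim: m h => [|m IH] h /=; first by rewrite oldf0.
rewrite oldfS H3 [ms_meet (ms_subst (cyl_fun _) _) h]meetC //.
have -> : ms_ex (ms_meet h (ms_subst (cyl_fun (m + p)) (ms_subst (oldf p m) s)))
  = ms_meet (ms_ex h) (ms_subst (oldf p m) s) by exact: H9.
rewrite [ms_meet (ms_ex h) _]meetC //; exact: IH.
Qed.

Lemma EXO m p (v : L p) : ms_le (ex_iter (ms_subst (oldf p m) v)) (ms_subst (idf p) v).
Proof.
elim: m => [|m IH] /=; first by rewrite oldf0; apply: le_refl.
apply: le_trans IH => //; apply: ex_iter_mono => //; rewrite oldfS H3.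
exact: ex_cyl_le.
Qed.

Notation BIG n F := (\big[ms_meet/ms_one _]_(i < n) F i).

Lemma big_ge k n (x : L k) (F : 'I_n -> L k) : (forall i, ms_le x (F i)) -> ms_le x (BIG n F).
Proof.
elim: n F => [|n IH] F h; first by rewrite big_ord0; apply: le1.
rewrite big_ord_recl; apply: le_meet => //; apply: IH => i; exact: h.
Qed.
Lemma big_le k n (F : 'I_n -> L k) i0 : ms_le (BIG n F) (F i0).
Proof.
elim: n F i0 => [|n IH] F i0; first by case: i0.
rewrite big_ord_recl; case: (unliftP ord0 i0) => [j ->|->].
  apply: (le_trans H1 (meet_r H1 _ _)); exact: IH.
exact: meet_l.
Qed.
Lemma subst_big k q n (a : {ffun 'I_k -> 'I_q}) (F : 'I_n -> L k) :
  ms_subst a (BIG n F) = BIG n (fun i => ms_subst a (F i)).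
Proof.
elim: n F => [|n IH] F; first by rewrite !big_ord0 subst_one.
by rewrite !big_ord_recl subst_meet // IH.
Qed.
End ExL.

Lemma rel_big L (M : mstruct L) (HM : almost_morphic M) k n (F : 'I_n -> L k) (x : {ffun 'I_k -> M}) :
  (forall i, st_rel (F i) x) -> st_rel (\big[ms_meet/ms_one _]_(i < n) F i) x.
Proof.
case: HM => _ [H1' [_ [HM _]]].
elim: n F => [|n IH] F h; first by rewrite big_ord0.
rewrite big_ord_recl; apply/HM; split=> //; apply: IH => i; exact: h.
Qed.

End M6.
Import M6.

Module M7.
Import all_boot.
Import Classical.
Set Implicit Arguments. Unset Strict Implicit. Unset Printing Implicit Defensive.

Section Wit.
Variable L : msalg.
Hypothesis H1 : ax1 L.
Hypothesis H2 : ax2 L.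
Hypothesis H3 : ax3 L.
Hypothesis H7 : ax7 L.
Hypothesis H8 : ax8 L.
Hypothesis H9 : ax9 L.
Hypothesis H10 : ax10 L.
Variable M1 : mstruct L.
Hypothesis HM1 : almost_morphic M1.

Definition W := {n : nat & {a : {ffun 'I_n -> M1} &
  {G : L n.+1 -> Prop | prime_filter G /\ (forall u : L n, G (cyl u) <-> st_rel u a)}}}.
Definition wn (w : W) : nat := projT1 w.
Definition wa (w : W) : {ffun 'I_(wn w) -> M1} := projT1 (projT2 w).
Definition wG (w : W) : L (wn w).+1 -> Prop := sval (projT2 (projT2 w)).
Arguments wG : clear implicits.
Lemma wG_pf w : prime_filter (wG w).
Proof. by case: (svalP (projT2 (projT2 w))). Qed.
Lemma wG_cyl w u : wG w (cyl u) <-> st_rel u (wa w).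
Proof. by case: (svalP (projT2 (projT2 w))) => _ h; exact: h. Qed.
Lemma wG_up w x y : wG w x -> ms_le x y -> wG w y.
Proof. by case: (wG_pf w) => _ _ h _ _; apply: h. Qed.
Lemma wG_meet w x y : wG w x -> wG w y -> wG w (ms_meet x y).
Proof. by case: (wG_pf w) => _ _ _ h _; apply: h. Qed.
Lemma wG_one w : wG w (ms_one _).
Proof. case: (wG_pf w) => _ [x Hx] h _ _; apply: h Hx _; exact: le1. Qed.
Lemma wG_ex w g : wG w g -> st_rel (ms_ex g) (wa w).
Proof. by move=> h; apply/wG_cyl; apply: wG_up h _; apply: H8. Qed.

Lemma rel_meet k (x y : L k) (c : {ffun 'I_k -> M1}) : st_rel (ms_meet x y) c <-> st_rel x c /\ st_rel y c.
Proof. by case: HM1 => _ [_ [_ [h _]]]; apply: h. Qed.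
Lemma rel_subst n k (a : {ffun 'I_n -> 'I_k}) r (c : {ffun 'I_k -> M1}) :
  st_rel (ms_subst a r) c <-> st_rel r (tuple_subst a c).
Proof. by case: HM1 => _ [_ [_ [_ [h _]]]]; apply: h. Qed.
Lemma rel_mono k (x y : L k) (c : {ffun 'I_k -> M1}) : st_rel x c -> ms_le x y -> st_rel y c.
Proof. by move=> h E; rewrite E in h; case/rel_meet: h. Qed.
Lemma rel_one k (c : {ffun 'I_k -> M1}) : st_rel (ms_one k) c.
Proof. by case: HM1 => _ [h _]; apply: h. Qed.

Definition X := (M1 + W)%type.
Definition eX : M1 -> X := inl.

Inductive Base : Th L X :=
| bOld k (c : {ffun 'I_k -> M1}) r : st_rel r c -> Base (emb eX c) r
| bNew (w : W) r : wG w r -> Base (snoc (emb eX (wa w)) (inr w)) r.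

Record gdata := GD {
  gp : nat; gm : nat; gd : {ffun 'I_gp -> M1}; gw : 'I_gm -> W;
  gB : forall i, {ffun 'I_(wn (gw i)).+1 -> 'I_(gm + gp)};
  gg : forall i, L (wn (gw i)).+1; gs : L gp }.
Arguments gw : clear implicits. Arguments gB : clear implicits. Arguments gg : clear implicits.

Definition layout p m (d : {ffun 'I_p -> M1}) (w : 'I_m -> W) : {ffun 'I_(m + p) -> X} :=
  [ffun j => match pos_case j with inl a => inl (d a) | inr b => inr (w b) end].
Definition lay (D : gdata) : {ffun 'I_(gm D + gp D) -> X} := layout (gd D) (gw D).

Definition prem (D : gdata) : L (gm D + gp D) :=
  ms_meet (ms_subst (oldf (gp D) (gm D)) (gs D))
    (\big[ms_meet/ms_one _]_(i < gm D) ms_subst (gB D i) (gg D i)).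

Definition valid (D : gdata) :=
  [/\ injective (gd D), injective (gw D),
      (forall i, tuple_subst (gB D i) (lay D) = snoc (emb eX (wa (gw D i))) (inr (gw D i))),
      (forall i, wG (gw D i) (gg D i)) & st_rel (gs D) (gd D)].

Definition Good : Th L X := fun k z t =>
  exists D, valid D /\ exists a : {ffun 'I_k -> 'I_(gm D + gp D)},
    tuple_subst a (lay D) = z /\ ms_le (prem D) (ms_subst a t).

Lemma layout_old p m (d : {ffun 'I_p -> M1}) (w : 'I_m -> W) a : @layout p m d w (oldpos m a) = inl (d a).
Proof. by rewrite ffunE pos_case_old. Qed.
Lemma layout_new p m (d : {ffun 'I_p -> M1}) (w : 'I_m -> W) b : @layout p m d w (newpos p b) = inr (w b).
Proof. by rewrite ffunE pos_case_new. Qed.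
Lemma lay_old D a : lay D (oldpos (gm D) a) = inl (gd D a).
Proof. exact: layout_old. Qed.
Lemma lay_new D b : lay D (newpos (gp D) b) = inr (gw D b).
Proof. exact: layout_new. Qed.

Lemma layout_inj p m (d : {ffun 'I_p -> M1}) (w : 'I_m -> W) : injective d -> injective w -> injective (@layout p m d w).
Proof.
move=> id iw i j.
rewrite -(pos_caseK i) -(pos_caseK j).
case: (pos_case i) => [a|b]; case: (pos_case j) => [a'|b'];
  rewrite ?layout_old ?layout_new => // -[] E.
- by rewrite (id _ _ E).
- by rewrite (iw _ _ E).
Qed.
Lemma lay_inj D : valid D -> injective (lay D).
Proof. by case=> id iw _ _ _; apply: layout_inj. Qed.

Lemma tsubE (Y : Type) n k (a : {ffun 'I_n -> 'I_k}) (x : {ffun 'I_k -> Y}) j :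
  tuple_subst a x j = x (a j).
Proof. by rewrite ffunE. Qed.
Lemma snoc_lift (Y : Type) n (x : {ffun 'I_n -> Y}) y j : snoc x y (lift ord_max j) = x j.
Proof. by rewrite ffunE liftK. Qed.
Lemma snoc_max (Y : Type) n (x : {ffun 'I_n -> Y}) y : snoc x y ord_max = y.
Proof. by rewrite ffunE unlift_none. Qed.
Lemma embE k (c : {ffun 'I_k -> M1}) j : emb eX c j = inl (c j).
Proof. by rewrite ffunE. Qed.
Lemma lay_caseP D j : (exists a, j = oldpos (gm D) a /\ lay D j = inl (gd D a)) \/
                      (exists b, j = newpos (gp D) b /\ lay D j = inr (gw D b)).
Proof.
rewrite -(pos_caseK j); case: (pos_case j) => [a|b].
  by left; exists a; rewrite lay_old.
by right; exists b; rewrite lay_new.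
Qed.

Lemma cons_good k (c : {ffun 'I_k -> M1}) t : Good (emb eX c) t -> st_rel t c.
Proof.
case=> D [vD [a [Ea le_a]]].
case: (vD) => id iw HB HG Hs.
have Hold : forall j, exists a0, a j = oldpos (gm D) a0 /\ gd D a0 = c j.
  move=> j; have := congr1 (fun f : {ffun _ -> X} => f j) Ea; rewrite tsubE embE.
  case: (lay_caseP (a j)) => [[a0 [E ->]]|[b0 [E ->]]] //.
  by move=> [E']; exists a0.
have [a0f Ha0] := fin_all_exists Hold.
pose a0 : {ffun 'I_k -> 'I_(gp D)} := [ffun j => a0f j].
have Ea0 : a = comp_fun (oldf (gp D) (gm D)) a0.
  by apply/ffunP=> j; rewrite !ffunE; case: (Ha0 j).
have Ec : tuple_subst a0 (gd D) = c by apply/ffunP=> j; rewrite !ffunE; case: (Ha0 j).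
have HBw : forall i (j : 'I_(wn (gw D i))), exists a1,
    gB D i (widen_ord (leqnSn _) j) = oldpos (gm D) a1 /\ gd D a1 = wa (gw D i) j.
  move=> i j; have := congr1 (fun f : {ffun _ -> X} => f (widen_ord (leqnSn _) j)) (HB i).
  rewrite tsubE widen_lift snoc_lift embE.
  case: (lay_caseP (gB D i (lift ord_max j))) => [[a1 [E ->]]|[b1 [E ->]]] //.
  by move=> [E']; exists a1.
have HBo : forall i (j : 'I_(wn (gw D i))), gB D i (widen_ord (leqnSn _) j) < gp D.
  by move=> i j; case: (HBw i j) => a1 [-> _] /=.
pose A := fun i => [ffun j => Ordinal (HBo i j)] : {ffun 'I_(wn (gw D i)) -> 'I_(gp D)}.
have HBm : forall i, val (gB D i ord_max) = gp D + i.
  move=> i; have := congr1 (fun f : {ffun _ -> X} => f ord_max) (HB i).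
  rewrite tsubE snoc_max.
  case: (lay_caseP (gB D i ord_max)) => [[a1 [E ->]]|[b1 [E ->]]] //.
  by move=> [/iw E']; rewrite E E'.
have HA : forall i (j : 'I_(wn (gw D i))), val (gB D i (widen_ord (leqnSn _) j)) = val (A i j).
  by move=> i j; rewrite ffunE.
have E10 := @H10 (gm D) (gp D) (fun i => wn (gw D i)) A (gB D) (gg D) HA HBm.
have key : ms_le (ms_meet (ms_subst (idf (gp D)) (gs D))
    (\big[ms_meet/ms_one _]_(i < gm D) ms_subst (A i) (ms_ex (gg D i))))
    (ms_subst (idf (gp D)) (ms_subst a0 t)).
  rewrite -E10 -EXM //; apply: (le_trans H1 _ (EXO H1 H3 H7 H9 _ _)).
  apply: ex_iter_mono => //; rewrite /prem in le_a; rewrite -H3 -Ea0; exact: le_a.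
have Eid : tuple_subst (idf (gp D)) (gd D) = gd D by apply/ffunP=> j; rewrite !ffunE.
have R : st_rel (ms_subst (idf (gp D)) (ms_subst a0 t)) (gd D).
  apply: rel_mono key; apply/rel_meet; split.
    by apply/rel_subst; rewrite Eid.
  apply: rel_big => // i; apply/rel_subst.
  have -> : tuple_subst (A i) (gd D) = wa (gw D i).
    apply/ffunP=> j; rewrite !ffunE.
    case: (HBw i j) => a1 [E1 E2]; rewrite -E2; congr (gd D _).
    by apply: val_inj; rewrite /= E1.
  exact: wG_ex.
move/rel_subst: R; rewrite Eid.
by move/rel_subst; rewrite Ec.
Qed.

End Wit.
Arguments wG {L M1} w _.
Arguments gw {L M1} g _.
Arguments gB {L M1} g i.
Arguments gg {L M1} g i.

End M7.
Import M7.

Module M8.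
Import all_boot.
Import boolp classical_sets.
Import Classical.
Set Implicit Arguments. Unset Strict Implicit. Unset Printing Implicit Defensive.

Section Merge.
Variable L : msalg.
Hypothesis H1 : ax1 L.
Hypothesis H2 : ax2 L.
Hypothesis H3 : ax3 L.
Variable M1 : mstruct L.
Hypothesis HM1 : almost_morphic M1.

Local Notation W := (W M1).
Local Notation X := (X M1).
Local Notation eX := (@eX L M1).

Lemma transport (x y : W) (E : x = y) q (U : {ffun 'I_q -> X}) (iU : injective U)
  (Bx : {ffun 'I_(wn x).+1 -> 'I_q}) (By : {ffun 'I_(wn y).+1 -> 'I_q}) (gx : L (wn x).+1) :
  tuple_subst Bx U = snoc (emb eX (wa x)) (inr x) ->
  tuple_subst By U = snoc (emb eX (wa y)) (inr y) ->
  wG x gx -> exists gy, wG y gy /\ ms_subst By gy = ms_subst Bx gx.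
Proof.
case: y / E By => By Ex Ey Hg; exists gx; split=> //.
by have -> : By = Bx by apply: (inj_uniq iU); rewrite Ex Ey.
Qed.

Lemma half (D1 : gdata M1) (vD1 : valid D1) q (U : {ffun 'I_q -> X}) (iU : injective U)
  (io : {ffun 'I_(gm D1 + gp D1) -> 'I_q}) (Eio : tuple_subst io U = lay D1)
  m (w : 'I_m -> W) (n : 'I_(gm D1) -> 'I_m) (En : forall j, w (n j) = gw D1 j)
  (i : 'I_m) (Bi : {ffun 'I_(wn (w i)).+1 -> 'I_q})
  (EBi : tuple_subst Bi U = snoc (emb eX (wa (w i))) (inr (w i))) :
  exists h, wG (w i) h /\ forall j, n j = i ->
    ms_le (ms_subst Bi h) (ms_subst (comp_fun io (gB D1 j)) (gg D1 j)).
Proof.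
case: vD1 => id1 iw1 HB1 HG1 _.
case: (classic (exists j, n j = i)) => [[j Ej]|nj]; last first.
  by exists (ms_one _); split; [apply: wG_one|move=> j Ej; case: nj; exists j].
have E : gw D1 j = w i by rewrite -En Ej.
have Ex : tuple_subst (comp_fun io (gB D1 j)) U = snoc (emb eX (wa (gw D1 j))) (inr (gw D1 j)).
  by rewrite -tsub_comp Eio HB1.
have [h [Gh Eh]] := transport E iU Ex EBi (HG1 j).
exists h; split=> // j' Ej'.
have -> : j' = j by apply: iw1; rewrite -!En Ej Ej'.
by rewrite Eh; apply: le_refl.
Qed.

Lemma premle (D D1 : gdata M1) (io : {ffun 'I_(gm D1 + gp D1) -> 'I_(gm D + gp D)})
  (o : {ffun 'I_(gp D1) -> 'I_(gp D)}) (n : 'I_(gm D1) -> 'I_(gm D)) :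
  comp_fun io (oldf (gp D1) (gm D1)) = comp_fun (oldf (gp D) (gm D)) o ->
  ms_le (gs D) (ms_subst o (gs D1)) ->
  (forall j, ms_le (ms_subst (gB D (n j)) (gg D (n j))) (ms_subst (comp_fun io (gB D1 j)) (gg D1 j))) ->
  ms_le (prem D) (ms_subst io (prem D1)).
Proof.
move=> Eo Hs Hg; rewrite /prem subst_meet // -H3 Eo H3 subst_big //.
apply: le_meet => //.
  apply: le_trans (meet_l _ _ _) _ => //; exact: subst_mono.
apply: big_ge => // j; rewrite -H3.
apply: le_trans (meet_r _ _ _) _ => //; exact: le_trans (big_le _ _ (n j)) (Hg j).
Qed.

Lemma gmerge (D1 D2 : gdata M1) : valid D1 -> valid D2 ->
  exists D, valid D /\ exists (i1 : {ffun 'I_(gm D1 + gp D1) -> 'I_(gm D + gp D)})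
    (i2 : {ffun 'I_(gm D2 + gp D2) -> 'I_(gm D + gp D)}),
  [/\ tuple_subst i1 (lay D) = lay D1, tuple_subst i2 (lay D) = lay D2 &
      ms_le (prem D) (ms_meet (ms_subst i1 (prem D1)) (ms_subst i2 (prem D2)))].
Proof.
move=> vD1 vD2.
case: (vD1) => id1 iw1 HB1 HG1 Hs1; case: (vD2) => id2 iw2 HB2 HG2 Hs2.
have [p [d [io [idd Ed]]]] := tcover (tcat (gd D1) (gd D2)).
pose o1 := comp_fun io (lsh (gp D1) (gp D2)).
pose o2 := comp_fun io (rsh (gp D1) (gp D2)).
have Eo1 : tuple_subst o1 d = gd D1 by rewrite -tsub_comp Ed tcat_l.
have Eo2 : tuple_subst o2 d = gd D2 by rewrite -tsub_comp Ed tcat_r.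
pose vw := fun j : 'I_(gm D1 + gm D2) =>
  match split j with inl j1 => gw D1 j1 | inr j2 => gw D2 j2 end.
have [m [w [iw0 [iww Ew Sw]]]] := tcover_fun vw.
pose n1 := fun j1 => iw0 (lshift (gm D2) j1).
pose n2 := fun j2 => iw0 (rshift (gm D1) j2).
have En1 : forall j, w (n1 j) = gw D1 j by move=> j; rewrite Ew /vw; have := unsplitK (inl _ j) => /= ->.
have En2 : forall j, w (n2 j) = gw D2 j by move=> j; rewrite Ew /vw; have := unsplitK (inr _ j) => /= ->.
pose U := layout d w.
have iU : injective U by apply: layout_inj.
pose i1 : {ffun 'I_(gm D1 + gp D1) -> 'I_(m + p)} :=
  [ffun j => match pos_case j with inl a => oldpos m (o1 a) | inr b => newpos p (n1 b) end].
pose i2 : {ffun 'I_(gm D2 + gp D2) -> 'I_(m + p)} :=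
  [ffun j => match pos_case j with inl a => oldpos m (o2 a) | inr b => newpos p (n2 b) end].
have Ei1 : tuple_subst i1 U = lay D1.
  apply/ffunP=> j; rewrite tsubE; case: (lay_caseP j) => [[a [-> ->]]|[b [-> ->]]].
    have -> : i1 (oldpos (gm D1) a) = oldpos m (o1 a) by rewrite /i1 ffunE pos_case_old.
    rewrite layout_old.
    by have := congr1 (fun f : {ffun _ -> M1} => f a) Eo1; rewrite tsubE => ->.
  have -> : i1 (newpos (gp D1) b) = newpos p (n1 b) by rewrite /i1 ffunE pos_case_new.
  by rewrite layout_new En1.
have Ei2 : tuple_subst i2 U = lay D2.
  apply/ffunP=> j; rewrite tsubE; case: (lay_caseP j) => [[a [-> ->]]|[b [-> ->]]].
    have -> : i2 (oldpos (gm D2) a) = oldpos m (o2 a) by rewrite /i2 ffunE pos_case_old.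
    rewrite layout_old.
    by have := congr1 (fun f : {ffun _ -> M1} => f a) Eo2; rewrite tsubE => ->.
  have -> : i2 (newpos (gp D2) b) = newpos p (n2 b) by rewrite /i2 ffunE pos_case_new.
  by rewrite layout_new En2.
have HBex : forall i : 'I_m, exists B : {ffun 'I_(wn (w i)).+1 -> 'I_(m + p)},
    tuple_subst B U = snoc (emb eX (wa (w i))) (inr (w i)).
  move=> i; have [j Ej] := Sw i; rewrite -Ej Ew /vw.
  case: (split j) => [j1|j2].
    exists (comp_fun i1 (gB D1 j1)); by rewrite -tsub_comp Ei1 HB1.
  exists (comp_fun i2 (gB D2 j2)); by rewrite -tsub_comp Ei2 HB2.
pose B := fun i => proj1_sig (cid (HBex i)).
have EB : forall i, tuple_subst (B i) U = snoc (emb eX (wa (w i))) (inr (w i)).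
  by move=> i; rewrite /B; case: (cid _).
have HGex : forall i : 'I_m, exists g, wG (w i) g /\
    (forall j, n1 j = i -> ms_le (ms_subst (B i) g) (ms_subst (comp_fun i1 (gB D1 j)) (gg D1 j))) /\
    (forall j, n2 j = i -> ms_le (ms_subst (B i) g) (ms_subst (comp_fun i2 (gB D2 j)) (gg D2 j))).
  move=> i.
  have [h1 [G1 L1]] := half vD1 iU Ei1 En1 (EB i).
  have [h2 [G2 L2]] := half vD2 iU Ei2 En2 (EB i).
  exists (ms_meet h1 h2); split; first exact: wG_meet.
  split=> j Ej.
    apply: le_trans (L1 j Ej) => //; apply: subst_mono => //; exact: meet_l.
  apply: le_trans (L2 j Ej) => //; apply: subst_mono => //; exact: meet_r.
pose g := fun i => proj1_sig (cid (HGex i)).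
have Pg : forall i, wG (w i) (g i) /\
    (forall j, n1 j = i -> ms_le (ms_subst (B i) (g i)) (ms_subst (comp_fun i1 (gB D1 j)) (gg D1 j))) /\
    (forall j, n2 j = i -> ms_le (ms_subst (B i) (g i)) (ms_subst (comp_fun i2 (gB D2 j)) (gg D2 j))).
  by move=> i; rewrite /g; case: (cid _).
pose s := ms_meet (ms_subst o1 (gs D1)) (ms_subst o2 (gs D2)).
exists (GD d B g s); split.
  split=> //=.
  - by move=> i; case: (Pg i).
  - apply/rel_meet => //; split; apply/rel_subst => //; by rewrite ?Eo1 ?Eo2.
exists i1, i2; split=> //.
have Eo : forall (o : {ffun 'I_(gp D1) -> 'I_p}) (n : 'I_(gm D1) -> 'I_m),
    comp_fun [ffun j => match pos_case j with inl a => oldpos m (o a) | inr b => newpos p (n b) end]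
      (oldf (gp D1) (gm D1)) = comp_fun (oldf p m) o.
  by move=> o n; apply/ffunP=> a; rewrite !ffunE pos_case_old.
have Eo' : forall (o : {ffun 'I_(gp D2) -> 'I_p}) (n : 'I_(gm D2) -> 'I_m),
    comp_fun [ffun j => match pos_case j with inl a => oldpos m (o a) | inr b => newpos p (n b) end]
      (oldf (gp D2) (gm D2)) = comp_fun (oldf p m) o.
  by move=> o n; apply/ffunP=> a; rewrite !ffunE pos_case_old.
apply: le_meet => //.
  apply: (premle (D := GD d B g s) (n := n1)) => //=; first exact: Eo.
    exact: meet_l.
  by move=> j; case: (Pg (n1 j)) => _ [h _]; apply: h.
apply: (premle (D := GD d B g s) (n := n2)) => //=; first exact: Eo'.
  exact: meet_r.
by move=> j; case: (Pg (n2 j)) => _ [_ h]; apply: h.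
Qed.

End Merge.

End M8.
Import M8.

Module M9.
Import all_boot.
Import Classical.
Set Implicit Arguments. Unset Strict Implicit. Unset Printing Implicit Defensive.

Lemma compE n k m (b : {ffun 'I_k -> 'I_m}) (a : {ffun 'I_n -> 'I_k}) i : comp_fun b a i = b (a i).
Proof. by rewrite ffunE. Qed.
Lemma oldfE p m a : oldf p m a = oldpos m a.
Proof. by rewrite ffunE. Qed.

Section Close.
Variable L : msalg.
Hypothesis H1 : ax1 L.
Hypothesis H2 : ax2 L.
Hypothesis H3 : ax3 L.
Variable M1 : mstruct L.
Hypothesis HM1 : almost_morphic M1.

Local Notation W := (W M1).
Local Notation X := (X M1).
Local Notation eX := (@eX L M1).

Lemma good_old k (c : {ffun 'I_k -> M1}) r : st_rel r c -> Good (emb eX c) r.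
Proof.
move=> Hr.
have [p [d [io [id Ed]]]] := tcover c.
pose w0 := @from0 (fun _ => W).
pose D := @GD L M1 p 0 d w0
  (@from0 (fun i => {ffun 'I_(wn (w0 i)).+1 -> 'I_(0 + p)}))
  (@from0 (fun i => L (wn (w0 i)).+1)) (ms_subst io r).
exists D; split.
  split=> //=; try by case.
  by apply/rel_subst => //; rewrite Ed.
exists (comp_fun (oldf p 0) io); split.
  apply/ffunP=> j; rewrite tsubE compE oldfE (@lay_old _ _ D) embE.
  by have := congr1 (fun f : {ffun _ -> M1} => f j) Ed; rewrite tsubE => ->.
rewrite H3; exact: meet_l.
Qed.

Lemma good_new (w : W) r : wG w r -> Good (snoc (emb eX (wa w)) (inr w)) r.
Proof.
move=> Hr.
have [p [d [io [id Ed]]]] := tcover (wa w).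
pose Bw : {ffun 'I_(wn w).+1 -> 'I_(1 + p)} :=
  [ffun j => if unlift ord_max j is Some j' then oldpos 1 (io j') else newpos p ord0].
pose D := @GD L M1 p 1 d (fun _ => w) (fun _ => Bw) (fun _ => r) (ms_one p).
have EB : tuple_subst Bw (lay D) = snoc (emb eX (wa w)) (inr w).
  apply/ffunP=> j; rewrite tsubE; case: (unliftP ord_max j) => [j' ->|->].
    rewrite snoc_lift embE.
    have -> : Bw (lift ord_max j') = oldpos 1 (io j') by rewrite ffunE liftK.
    rewrite (@lay_old _ _ D).
    by have := congr1 (fun f : {ffun _ -> M1} => f j') Ed; rewrite tsubE /= => ->.
  rewrite snoc_max.
  have -> : Bw ord_max = newpos p ord0 by rewrite ffunE unlift_none.
  by rewrite (@lay_new _ _ D).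
exists D; split.
  split=> //=.
  - by move=> i j _; rewrite !ord1.
  - exact: rel_one.
exists Bw; split=> //.
apply: le_trans (meet_r _ _ _) _ => //; exact: (big_le H1 _ ord0).
Qed.

Lemma atom (x : X) : exists D, valid D /\ exists pos, lay D pos = x.
Proof.
case: x => [c0|w].
  have [D [vD [a [Ea _]]]] := good_old (rel_one HM1 ([ffun _ : 'I_1 => c0])).
  exists D; split=> //; exists (a ord0).
  by have := congr1 (fun f : {ffun _ -> X} => f ord0) Ea; rewrite tsubE embE (ffunE (fun _ : 'I_1 => c0)).
have [D [vD [a [Ea _]]]] := good_new (wG_one H1 w).
exists D; split=> //; exists (a ord_max).
by have := congr1 (fun f : {ffun _ -> X} => f ord_max) Ea; rewrite tsubE snoc_max.
Qed.

Lemma cover_good k (z : {ffun 'I_k -> X}) :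
  exists D, valid D /\ exists a : {ffun 'I_k -> 'I_(gm D + gp D)}, tuple_subst a (lay D) = z.
Proof.
elim: k z => [|k IH] z.
  have [D [vD [a [Ea _]]]] := good_old (rel_one HM1 ([ffun i : 'I_0 => from0 (fun _ => M1) i])).
  by exists D; split=> //; exists a; apply/ffunP => -[].
have [D1 [vD1 [a1 Ea1]]] := IH [ffun i : 'I_k => z (widen_ord (leqnSn k) i)].
have [D2 [vD2 [pos Epos]]] := atom (z ord_max).
have [D [vD [i1 [i2 [Ei1 Ei2 _]]]]] := gmerge H1 H2 H3 HM1 vD1 vD2.
exists D; split=> //.
pose al : {ffun 'I_k.+1 -> 'I_(gm D + gp D)} :=
  [ffun j => if unlift ord_max j is Some j' then i1 (a1 j') else i2 pos].
exists al.
apply/ffunP=> j; rewrite tsubE; case: (unliftP ord_max j) => [j' ->|->].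
  have -> : al (lift ord_max j') = i1 (a1 j') by rewrite /al ffunE liftK.
  have := congr1 (fun f : {ffun _ -> X} => f (a1 j')) Ei1; rewrite tsubE => ->.
  have := congr1 (fun f : {ffun _ -> X} => f j') Ea1.
  rewrite tsubE (ffunE (fun i : 'I_k => z (widen_ord (leqnSn k) i))) => ->.
  by rewrite widen_lift.
have -> : al ord_max = i2 pos by rewrite /al ffunE unlift_none.
rewrite -Epos.
by have := congr1 (fun f : {ffun _ -> X} => f pos) Ei2; rewrite tsubE => ->.
Qed.

Lemma cl_good : subTh (Cl (@Base L M1)) (@Good L M1).
Proof.
move=> k z t H; elim: H => {k z t}.
- move=> k z t [k' c r Hr|w r Hr]; [exact: good_old|exact: good_new].
- move=> k z.
  have [D [vD [a Ea]]] := cover_good z.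
  exists D; split=> //; exists a; split=> //; rewrite subst_one //; exact: le1.
- move=> k z t1 t2 _ [D1 [vD1 [a1 [Ea1 L1]]]] _ [D2 [vD2 [a2 [Ea2 L2]]]].
  have [D [vD [i1 [i2 [Ei1 Ei2 LD]]]]] := gmerge H1 H2 H3 HM1 vD1 vD2.
  have E : comp_fun i1 a1 = comp_fun i2 a2.
    by apply: (inj_uniq (lay_inj vD)); rewrite -!tsub_comp Ei1 Ei2 Ea1 Ea2.
  exists D; split=> //; exists (comp_fun i1 a1); split; first by rewrite -tsub_comp Ei1.
  apply: le_trans LD _ => //; rewrite subst_meet //; apply: meet_mono => //.
    by rewrite H3; apply: subst_mono.
  by rewrite E H3; apply: subst_mono.
- move=> k z t s _ [D [vD [a [Ea La]]]] h.
  exists D; split=> //; exists a; split=> //; apply: le_trans La _ => //; exact: subst_mono.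
- move=> n k g z t _ [D1 [vD1 [a1 [Ea1 L1]]]].
  have [D2 [vD2 [a2 Ea2]]] := cover_good z.
  have [D [vD [i1 [i2 [Ei1 Ei2 LD]]]]] := gmerge H1 H2 H3 HM1 vD1 vD2.
  have E : comp_fun (comp_fun i2 a2) g = comp_fun i1 a1.
    by apply: (inj_uniq (lay_inj vD)); rewrite -!tsub_comp Ei1 Ei2 Ea2 Ea1.
  exists D; split=> //; exists (comp_fun i2 a2); split; first by rewrite -tsub_comp Ei2.
  rewrite -H3 E H3; apply: le_trans LD _ => //; apply: le_trans (meet_l _ _ _) _ => //.
  exact: subst_mono.
- move=> n k g z t _ [D [vD [a [Ea La]]]].
  exists D; split=> //; exists (comp_fun a g); split; first by rewrite -tsub_comp Ea.
  by rewrite H3.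
Qed.

End Close.

End M9.
Import M9.

Unset Implicit Arguments.

Theorem lemma4p13 (L : msalg) (HL : ms_axioms L) (M1 : mstruct L)
  (M1_ne : inhabited M1) (HM1 : almost_morphic M1) :
  exists (M2 : mstruct L) (e : M1 -> M2),
    [/\ substructure e, almost_morphic M2 & has_witnesses e].
Proof.
move: HL => [H1 [H2 [H3 [H7 [H8 [H9 H10]]]]]].
case: M1_ne => m0.
have HB : Conserv (@eX L M1) (@Base L M1).
  move=> k c t h; apply: (cons_good H1 H3 H7 H8 H9 H10 HM1).
  exact: (cl_good H1 H2 H3 HM1 h).
have [T [BT TT PT CT]] := exists_theory H1 H2 H3 HM1 HB.
have ie : injective (@eX L M1) by move=> x y [].
have HB1 : forall k (c : {ffun 'I_k -> M1}) r, st_rel r c -> @Base L M1 k (emb (@eX L M1) c) r.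
  by move=> k c r h; apply: bOld.
exists (M2 T), (@eX L M1); split.
- exact: (M2_sub ie BT CT HB1).
- exact: (M2_am H1 H2 H8 HM1 m0 TT PT CT).
- move=> n a G pf cond.
  pose w : W M1 := existT _ n (existT _ a (exist _ G (conj pf cond))).
  exists (inr w) => r Gr.
  exact: (BT _ _ _ (@bNew L M1 w r Gr)).
Qed.
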